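(* Let $X_1,X_2$ be independent integer random variables with $\mathbb P(X_1=0)=\frac{\sqrt2-1}{\sqrt2}$, $\mathbb P(X_1=1)=\frac1{\sqrt2}$, and $\mathbb P(X_2=-k)=\sqrt2(\sqrt2-1)^{k+1}$ for $k=0,1,2,\dots$, and let $X=X_1+X_2$. Then $\mathbb E(X)=0$, $\operatorname{Var}(X)=\sqrt2$, and for all $x,y\in\mathbb Z$ $$T(x,y)=(\sqrt2+1)^{2-y+x}\,\mathbb P(X=y-x).$$ Equivalently, for every $f\in\ell^1(\mathbb Z)$, $(Tf)(x)=(\sqrt2+1)^2\,\mathbb E\big((\sqrt2+1)^{-X}f(x+X)\big)$.
   Context: $T(x,y)=2$ if $y\le x$, $T(x,y)=1$ if $y=x+1$, $T(x,y)=0$ if $y>x+1$ ($x,y\in\mathbb Z$), and $(Tf)(x)=\sum_{y\in\mathbb Z}T(x,y)f(y)$. *)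

(* Defs.v *)
From HB Require Import structures.
From mathcomp Require Import all_boot all_order all_algebra.
From mathcomp Require Import all_classical all_reals all_analysis.
Set Implicit Arguments. Unset Strict Implicit. Unset Printing Implicit Defensive.
Import Order.TTheory GRing.Theory Num.Theory.
Import numFieldTopology.Exports numFieldNormedType.Exports.
Local Open Scope classical_set_scope.
Local Open Scope ring_scope.

Definition Tker (R : realType) (x y : int) : R :=
  if (y <= x)%R then 2 else if y == x + 1 then 1 else 0.

Definition Zpsum (R : realType) (g : int -> R) (N : nat) : R :=
  \sum_(0 <= i < (N.*2).+1) g (i%:Z - N%:Z).

Definition ell1 (R : realType) (f : int -> R) : Prop :=
  exists M : R, forall N, Zpsum (fun y => `|f y|) N <= M.

Definition Zsum (R : realType) (g : int -> R) : R := lim (Zpsum g @ \oo).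

Definition Top (R : realType) (f : int -> R) (x : int) : R :=
  Zsum (fun y => Tker R x y * f y).

Definition indep2 d (Omega : measurableType d) (R : realType)
  (P : probability Omega R) (X Y : Omega -> R) : Prop :=
  forall A B : set R, measurable A -> measurable B ->
    P (X @^-1` A `&` Y @^-1` B) = (P (X @^-1` A) * P (Y @^-1` B))%E.

(* Main.v *)
Require Import Defs.
From HB Require Import structures.
From mathcomp Require Import all_boot all_order all_algebra.
From mathcomp Require Import all_classical all_reals all_analysis.
From mathcomp Require Import ring lra zify.
Import Order.TTheory GRing.Theory Num.Theory.
Import numFieldTopology.Exports numFieldNormedType.Exports.
Local Open Scope classical_set_scope.
Local Open Scope ring_scope.


Section consts.
Variable R : realType.
Local Notation s := (Num.sqrt (2:R)).
Local Notation q := (Num.sqrt (2:R) - 1).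

Lemma s_sq : s * s = 2.
Proof. by rewrite -expr2 sqr_sqrtr. Qed.

Lemma s_ge0 : 0 <= s. Proof. exact: sqrtr_ge0. Qed.

Lemma q_gt0 : 0 < q.
Proof. have := s_sq; have := s_ge0; nra. Qed.

Lemma q_lt : q < 21/50.
Proof. have := s_sq; have := s_ge0; nra. Qed.

Lemma q_eq : q ^+ 2 + 2 * q - 1 = 0.
Proof. have := s_sq; rewrite expr2; lra. Qed.

Lemma nsq_cvg : (fun n : nat => n%:R ^+ 2 * q ^+ n) @ \oo --> (0:R).
Proof.
set u := (fun n : nat => _).
have H n : (3 <= n)%N -> u n.+1 <= 3/4 * u n.
  move=> n3; rewrite /u [X in _ * X <= _]exprSr.
  have n3' : (3:R) <= n%:R by rewrite (ler_nat R 3 n).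
  have t0 : 0 <= q ^+ n by rewrite exprn_ge0 // ltW // q_gt0.
  have hq := q_gt0; have hq2 := q_lt.
  rewrite -natr1.
  have : (n%:R + 1) ^+ 2 * q <= 3 / 4 * n%:R ^+ 2 :> R.
    rewrite !expr2; nra.
  move=> h; move: t0 h; set t := q ^+ n; set x := n%:R ^+ 2; set y := (_ + 1) ^+ 2; nra.
have H2 n : u (n + 3)%N <= u 3%N * (3/4) ^+ n.
  elim: n => [|n IH]; first by rewrite add0n expr0 mulr1.
  rewrite addSn; apply: (le_trans (H _ _)); first by rewrite leq_addl.
  have : 0 <= 3/4 :> R by lra.
  move=> h; rewrite [(3/4) ^+ n.+1]exprS [X in _ <= X]mulrCA; exact: ler_wpM2l.
have u0 n : 0 <= u n by rewrite /u mulr_ge0 // ?exprn_ge0 // ltW // q_gt0.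
rewrite -(cvg_shiftn 3).
apply: (squeeze_cvgr (f := cst 0) (h := (fun n => u 3%N * (3/4) ^+ n))).
- by apply: nearW => n; rewrite u0 H2.
- exact: cvg_cst.
- rewrite -(mulr0 (u 3%N)); apply: cvgMl_tmp; apply: cvg_expr.
  by rewrite ger0_norm; lra.
Qed.

Lemma n_cvg : (fun n : nat => n%:R * q ^+ n) @ \oo --> (0:R).
Proof.
apply: (squeeze_cvgr (f := cst 0) (h := (fun n : nat => n%:R ^+ 2 * q ^+ n))); last 2 first.
- exact: cvg_cst.
- exact: nsq_cvg.
apply: nearW => n; have t0 : 0 <= q ^+ n by rewrite exprn_ge0 // ltW // q_gt0.
rewrite mulr_ge0 //=; apply: ler_wpM2r => //.
move: t0; case: n => [|n] t0; first by rewrite expr2 mul0r.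
by rewrite expr2 ler_peMl // ler1n.
Qed.

Lemma q_cvg : (fun n : nat => q ^+ n) @ \oo --> (0:R).
Proof.
apply: cvg_expr; rewrite ger0_norm; have := q_lt; have := q_gt0; lra.
Qed.

End consts.

Section zpsum.
Variable R : realType.

Lemma Zpsum0 (g : int -> R) : Zpsum g 0 = g 0.
Proof. by rewrite /Zpsum /= big_nat1 subrr. Qed.

Lemma Zpsum_S (g : int -> R) N :
  Zpsum g N.+1 = Zpsum g N + g (- (N.+1)%:Z) + g (N.+1)%:Z.
Proof.
rewrite /Zpsum doubleS big_nat_recl // big_nat_recr //=.
have -> : \sum_(0 <= i < N.*2.+1) g (i.+1%:Z - N.+1%:Z) =
          \sum_(0 <= i < N.*2.+1) g (i%:Z - N%:Z).
  by apply: eq_bigr => i _; congr g; lia.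
have -> : (N.*2.+1).+1%:Z - N.+1%:Z = N.+1%:Z by lia.
have -> : 0%:Z - N.+1%:Z = - N.+1%:Z by lia.
ring.
Qed.

Lemma Zpsum_le (g1 g2 : int -> R) N : (forall y, g1 y <= g2 y) ->
  Zpsum g1 N <= Zpsum g2 N.
Proof. by move=> h; apply: ler_sum => i _; exact: h. Qed.

Lemma Zpsum_mulr (g : int -> R) a N : Zpsum (fun y => a * g y) N = a * Zpsum g N.
Proof. by rewrite /Zpsum mulr_sumr. Qed.

End zpsum.

Definition pX (R : realType) (m : int) : R :=
  if (m <= 0)%R then 2 * (Num.sqrt 2 - 1) ^+ (`|m|%N.+2)
  else if m == 1 then Num.sqrt 2 - 1 else 0.

Section closed.
Variable R : realType.
Local Notation s := (Num.sqrt (2:R)).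
Local Notation q := (Num.sqrt (2:R) - 1).

Lemma pX_neg k : pX R (- (k%:Z)) = 2 * q ^+ k.+2.
Proof. by rewrite /pX oppr_le0 lez_nat abszN absz_nat. Qed.

Lemma pX_pos k : pX R (k.+1%:Z) = if k == 0%N then q else 0.
Proof. by rewrite /pX lez_nat /= eqz_nat eqSS. Qed.

Lemma pX0 : pX R 0 = 2 * q ^+ 2.
Proof. by rewrite /pX. Qed.

Lemma qrel (K : R) : K * (q ^+ 2 + 2 * q - 1) = 0.
Proof. by rewrite q_eq mulr0. Qed.

Lemma intr_natz n : (n%:Z)%:~R = n%:R :> R.
Proof. by rewrite -pmulrn. Qed.

Definition ee n := Zpsum (fun y => y%:~R * pX R y) n.
Definition vv n := Zpsum (fun y => y%:~R * y%:~R * pX R y) n.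

Lemma ee_closed n : ee n.+1 = (n%:R + 2) * q ^+ n.+2 - (n%:R + 1) * q ^+ n.+3.
Proof.
elim: n => [|n IH].
  rewrite /ee Zpsum_S Zpsum0 pX_neg pX_pos /= intrN !intr_natz !mul0r add0r.
  apply/eqP; rewrite -subr_eq0; apply/eqP; rewrite -[RHS](qrel (- q)); ring.
rewrite /ee Zpsum_S -/(ee n.+1) IH pX_neg pX_pos /= intrN !intr_natz mulr0 addr0.
apply/eqP; rewrite -subr_eq0; apply/eqP.
rewrite -[RHS](qrel (- (n%:R + 2) * q ^+ n.+2)) !exprS.
rewrite -?[n.+2]addn2 -?[n.+1]addn1 !natrD; ring.
Qed.

Lemma vv_closed n : vv n.+1 =
  s - ((3 * q - 1) * (n%:R + 1) ^+ 2 + 2 * q * (n%:R + 1) + 1) * q ^+ n.+1.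
Proof.
elim: n => [|n IH].
  rewrite /vv Zpsum_S Zpsum0 pX_neg pX_pos /= intrN !intr_natz !mul0r add0r.
  apply/eqP; rewrite -subr_eq0; apply/eqP; rewrite -[RHS](qrel (2 * q + 1)); ring.
rewrite /vv Zpsum_S -/(vv n.+1) IH pX_neg pX_pos /= intrN !intr_natz mulr0 addr0.
apply/eqP; rewrite -subr_eq0; apply/eqP.
rewrite -[RHS](qrel (q ^+ n.+1 * (2 * (n%:R + 2) ^+ 2 * q + 1 - (n%:R + 1) ^+ 2))) !exprS.
rewrite -?[n.+2]addn2 -?[n.+1]addn1 !natrD; ring.
Qed.

End closed.

Section limits.
Variable R : realType.
Local Notation s := (Num.sqrt (2:R)).
Local Notation q := (Num.sqrt (2:R) - 1).

Lemma q_gt13 : 1/3 < q.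
Proof. have := s_sq R; have := s_ge0 R; nra. Qed.

Lemma ee_cvg : ee R @ \oo --> 0.
Proof.
rewrite -cvg_shiftS.
have E : forall n : nat, ee R n.+1 = (fun m : nat => m%:R * q ^+ m) (n + 2)%N
    - q ^+ 2 * (fun m : nat => m%:R * q ^+ m) (n + 1)%N :> R.
  move=> n /=; rewrite ee_closed addn2 addn1 !exprS -[n.+2]addn2 -[n.+1]addn1 !natrD; ring.
rewrite (eq_cvg _ _ E).
have h1 : (fun n : nat => (fun m : nat => m%:R * q ^+ m) (n + 2)%N) @ \oo --> (0:R).
  by rewrite (cvg_shiftn 2 (fun m : nat => m%:R * q ^+ m)); exact: n_cvg.
have h2 : (fun n : nat => (fun m : nat => m%:R * q ^+ m) (n + 1)%N) @ \oo --> (0:R).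
  by rewrite (cvg_shiftn 1 (fun m : nat => m%:R * q ^+ m)); exact: n_cvg.
have h := cvgB h1 (cvgMl_tmp (a := q ^+ 2) h2).
rewrite mulr0 subr0 in h; exact: h.
Qed.

Lemma vv_cvg : vv R @ \oo --> s.
Proof.
rewrite -cvg_shiftS.
have E : forall n : nat, vv R n.+1 = s - ((3 * q - 1) *
   (fun m : nat => m%:R ^+ 2 * q ^+ m) n.+1 + 2 * q * (fun m : nat => m%:R * q ^+ m) n.+1
   + (fun m : nat => q ^+ m) n.+1) :> R.
  move=> n /=; rewrite vv_closed natr1; ring.
rewrite (eq_cvg _ _ E).
have h2 := nsq_cvg R; rewrite -cvg_shiftS in h2.
have h1 := n_cvg R; rewrite -cvg_shiftS in h1.
have h0 := q_cvg R; rewrite -cvg_shiftS in h0.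
have h := cvgB (cvg_cst s) (cvgD (cvgD (cvgMl_tmp (a := 3 * q - 1) h2)
   (cvgMl_tmp (a := 2 * q) h1)) h0).
rewrite !mulr0 !addr0 subr0 in h; exact: h.
Qed.

Lemma vv_le n : vv R n <= s.
Proof.
case: n => [|n]; first by rewrite /vv Zpsum0 !mul0r s_ge0.
rewrite vv_closed lerBlDr lerDl; apply: mulr_ge0; last first.
  by rewrite exprn_ge0 // ltW // q_gt0.
have h1 := q_gt13; have h2 : 0 <= n%:R :> R by [].
apply: addr_ge0 => //; apply: addr_ge0; apply: mulr_ge0; rewrite ?exprn_ge0; try lra.
Qed.

Lemma abs_le_sq (y : int) : `|y%:~R| <= y%:~R * y%:~R :> R.
Proof.
case: y => n; last rewrite NegzE intrN normrN mulrNN.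
  by rewrite intr_natz ger0_norm // -natrM ler_nat; nia.
by rewrite intr_natz ger0_norm // -natrM ler_nat; nia.
Qed.

End limits.


Section delta.
Variable R : realType.

Lemma Zpsum_delta (F : int -> R) (j : int) N :
  Zpsum (fun y => F y * (y == j)%:R) N = if (- N%:Z <= j <= N%:Z) then F j else 0.
Proof.
elim: N => [|N IH].
  rewrite Zpsum0; have [->|nj] := eqVneq j 0.
    have -> : (- 0%:Z <= 0 <= 0%:Z) = true by apply/andP; split; lia.
    by rewrite /= mulr1.
  rewrite /= mulr0.
  by case: ifP => // /andP[h1 h2]; exfalso; move: nj => /eqP; lia.
rewrite Zpsum_S IH.
have [->|n1] := eqVneq j (- N.+1%:Z).
  have e1 : (- N%:Z <= - N.+1%:Z <= N%:Z) = false by apply/negbTE; apply/negP => /andP[]; lia.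
  have e2 : (- N.+1%:Z <= - N.+1%:Z <= N.+1%:Z) by apply/andP; split; lia.
  have e3 : (N.+1%:Z == - N.+1%:Z) = false by apply/negbTE/eqP; lia.
  by rewrite e1 e2 ?e3 /= ?eqxx ?mulr1 ?mulr0 ?add0r ?addr0.
have [->|n2] := eqVneq j N.+1%:Z.
  have e1 : (- N%:Z <= N.+1%:Z <= N%:Z) = false by apply/negbTE; apply/negP => /andP[]; lia.
  have e2 : (- N.+1%:Z <= N.+1%:Z <= N.+1%:Z) by apply/andP; split; lia.
  have e3 : (- N.+1%:Z == N.+1%:Z) = false by apply/negbTE/eqP; lia.
  by rewrite e1 e2 ?e3 /= ?eqxx ?mulr1 ?mulr0 ?add0r ?addr0.
rewrite ?(negbTE n1) ?(negbTE n2) /= !mulr0 !addr0.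
case: ifP => /andP h; case: ifP => /andP h' //; exfalso.
- by move: n1 n2 => /eqP n1 /eqP n2; case: h => h1 h2; apply: h'; split; lia.
- by move: n1 n2 => /eqP n1 /eqP n2; apply: h; case: h' => h1 h2; split; lia.
Qed.

End delta.

Section gen.
Context (R : realType) (d : measure_display) (T : measurableType d)
  (P : probability T R).
Variables (Y : T -> R) (mY : measurable_fun setT Y)
  (iY : forall w, Y w \is a Num.int) (c : int).

Local Notation Aset y := (Y @^-1` [set ((y - c)%:~R : R)]).
Local Notation pY y := (fine (P (Aset y))).

Lemma mAset y : measurable (Aset y).
Proof. by rewrite -[X in measurable X]setTI; exact: mY. Qed.

Lemma indic_A y w : \1_(Aset y) w = (y == c + Num.floor (Y w))%:R :> R.
Proof.
rewrite indicE; suff -> : (w \in Aset y) = (y == c + Num.floor (Y w)) by [].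
have Yw : Y w = (Num.floor (Y w))%:~R by rewrite Num.Theory.floorK.
apply/idP/idP.
  rewrite inE /= Yw => /eqP; rewrite (inj_eq (@intr_inj _)) => /eqP ->.
  by rewrite intrKfloor addrC subrK.
move=> /eqP ->; rewrite inE /=; rewrite [in LHS]Yw; congr (_%:~R); ring.
Qed.

Definition GN (h : int -> R) N w := Zpsum (fun y => h y * \1_(Aset y) w) N.

Lemma GN_eq h N w : GN h N w =
  if (- N%:Z <= c + Num.floor (Y w) <= N%:Z) then h (c + Num.floor (Y w)) else 0.
Proof.
rewrite /GN -Zpsum_delta; congr Zpsum; apply/funext => y.
by rewrite indic_A.
Qed.

Lemma mGN h N : measurable_fun setT (GN h N).
Proof.
rewrite /GN /Zpsum; apply: measurable_sum => i.
apply: measurable_realfun.measurable_funM; first exact: measurable_cst.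
exact/measurable_realfun.measurable_indic/mAset.
Qed.

Lemma int_GN h N : (\int[P]_w (GN h N w)%:E = (Zpsum (fun y => h y * pY y) N)%:E)%E.
Proof.
rewrite /GN /Zpsum -sumEFin.
under eq_integral do rewrite -sumEFin.
rewrite integral_sum //; last first.
  move=> i; under eq_fun do rewrite EFinM.
  by apply: integrableZl => //; apply: integrable_indic; exact: mAset.
apply: eq_bigr => i _; under eq_integral do rewrite EFinM.
rewrite integralZl //; last by apply: integrable_indic; exact: mAset.
rewrite integral_indic ?setIT; last exact: mAset.
  by rewrite EFinM fineK // fin_num_measure //; exact: mAset.
exact: measurableT.
Qed.

Lemma GN_cvg (h : int -> R) (w : T) : (fun N => GN h N w) @ \oo --> h (c + Num.floor (Y w)).
Proof.
set k := c + Num.floor (Y w).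
have H : \forall N \near \oo, (fun=> h k) N = (fun N => GN h N w) N.
  exists `|k|%N => // N /= hN; rewrite GN_eq -/k.
  have : `|k| <= N%:Z by rewrite -abszE lez_nat.
  by rewrite ler_norml => ->.
apply: cvg_trans (near_eq_cvg H) _; exact: cvg_cst.
Qed.

Lemma mG (h : int -> R) : measurable_fun setT (fun w => h (c + Num.floor (Y w))).
Proof.
apply: (measurable_realfun.measurable_fun_cvg (h := fun N => GN h N)) => [N|w _].
  exact: mGN.
exact: GN_cvg.
Qed.

Lemma expect_series (h : int -> R) (M : R) : (forall N, Zpsum (fun y => `|h y| * pY y) N <= M) ->
  exists l, (fun N => Zpsum (fun y => h y * pY y) N) @ \oo --> l /\
   ('E_P[fun w => h (c + Num.floor (Y w))%R] = l%:E)%E.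
Proof.
move=> HM.
pose ha := fun y => `|h y|.
have mc : (\int[P]_x (GN ha n x)%:E)%E @[n --> \oo] -->
          (\int[P]_x limn (fun N => (GN ha N x)%:E))%E.
  apply: cvg_monotone_convergence => //.
  - by move=> N; apply/measurable_realfun.measurable_EFinP; exact: mGN.
  - by move=> N w _; rewrite GN_eq lee_fin; case: ifP => _ //; exact: normr_ge0.
  - move=> w _ n m nm; rewrite !GN_eq lee_fin.
    case: ifP => /andP h1; case: ifP => /andP h2 //.
    + exfalso; apply: h2; case: h1 => h1 h3; split; lia.
    + by rewrite /ha normr_ge0.
have lim_eq w : limn (fun N => (GN ha N w)%:E) = (`|h (c + Num.floor (Y w))%R|)%:E.
  apply/cvg_lim => //; apply/fine_cvgP; split; first exact: nearW.
  exact: (GN_cvg ha w).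
have int_abs : (\int[P]_w (`|h (c + Num.floor (Y w))%R|)%:E <= M%:E)%E.
  have <- : (\int[P]_w limn (fun N => (GN ha N w)%:E) =
             \int[P]_w (`|h (c + Num.floor (Y w))%R|)%:E)%E.
    by apply: eq_integral => w _; exact: lim_eq.
  rewrite -(cvg_lim _ mc) //; apply: lime_le; first exact: (cvgP _ mc).
  by apply: nearW => N; rewrite int_GN lee_fin; exact: HM.
have intG : P.-integrable setT (fun w => (h (c + Num.floor (Y w))%R)%:E).
  apply/integrableP; split; first exact/measurable_realfun.measurable_EFinP/mG.
  under eq_integral do rewrite abse_EFin.
  exact: le_lt_trans int_abs (ltry M).
have intA := integrable_norm intG.
have f_f : \forall x \ae P, setT x -> (fun N => (GN h N x)%:E) @ \oo -->
    (h (c + Num.floor (Y x))%R)%:E.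
  apply: aeW => w _; apply/fine_cvgP; split; first exact: nearW.
  exact: (GN_cvg h w).
have f_g : \forall x \ae P, forall N, setT x -> (`|(GN h N x)%:E| <=
    (`|h (c + Num.floor (Y x))%R|)%:E)%E.
  apply: aeW => w N _; rewrite abse_EFin lee_fin GN_eq /=; case: ifP => _ //.
  by rewrite normr0 normr_ge0.
have [_ _ cvgI] := dominated_convergence (mu := P) measurableT
  (f_ := fun N w => (GN h N w)%:E) (f := fun w => (h (c + Num.floor (Y w))%R)%:E)
  (fun N => (measurable_realfun.measurable_EFinP _ _).2 (mGN h N))
  ((measurable_realfun.measurable_EFinP _ _).2 (mG h)) f_f intA f_g.
have fin := integrable_fin_num measurableT intG.
exists (fine (\int[P]_w (h (c + Num.floor (Y w))%R)%:E)%E).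
split; last by rewrite unlock /= fineK.
move: cvgI; rewrite -(fineK fin).
have E' : forall N, (\int[P]_w (GN h N w)%:E)%E = (Zpsum (fun y => h y * pY y) N)%:E.
  exact: int_GN.
rewrite (eq_cvg _ _ E') => /fine_cvgP[_]; exact.
Qed.

End gen.


Section dist.
Context (R : realType) (d : measure_display) (T : measurableType d)
  (P : probability T R) (X1 X2 : {RV P >-> R}).
Local Notation s := (Num.sqrt (2:R)).
Local Notation q := (Num.sqrt (2:R) - 1).
Hypothesis hind : indep2 P X1 X2.
Hypothesis h0 : P (X1 @^-1` [set 0]) = ((s - 1) / s)%:E.
Hypothesis h1 : P (X1 @^-1` [set 1]) = (1 / s)%:E.
Hypothesis h2 : forall k : nat,
     P (X2 @^-1` [set - k%:R]) = (s * q ^+ k.+1)%:E.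

Local Notation B j := (X2 @^-1` [set (j%:~R : R)]).

Lemma mB (j : int) : measurable (B j).
Proof. exact: measurable_funPTI. Qed.

Lemma geo_sum n : \sum_(k < n) s * q ^+ k.+1 = 1 - q ^+ n.
Proof.
elim: n => [|n IH]; first by rewrite big_ord0 expr0 subrr.
rewrite big_ord_recr /= IH.
apply/eqP; rewrite -subr_eq0; apply/eqP.
rewrite -[RHS](qrel R (q ^+ n)) !exprS; ring.
Qed.

Lemma PB_pos (k : nat) : P (B (k.+1)%:Z) = 0%E.
Proof.
pose Bn (i : nat) := X2 @^-1` [set - i%:R].
have mBn i : measurable (Bn i) by exact: measurable_funPTI.
have tB : trivIset setT Bn.
  move=> i j _ _ [w [hi hj]]; rewrite /Bn /= in hi hj; rewrite hi in hj.
  by move/eqP: hj; rewrite eqr_opp eqr_nat => /eqP.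
have Un n : P (\big[setU/set0]_(i < n) Bn i) = (1 - q ^+ n)%:E.
  rewrite measure_bigsetU // -geo_sum -sumEFin; apply: eq_bigr => i _; exact: h2.
have mU n : measurable (\big[setU/set0]_(i < n) Bn i).
  by apply: bigsetU_measurable => i _.
have le n : (P (B (k.+1)%:Z) <= (q ^+ n)%:E)%E.
  apply: (@le_trans _ _ (P (~` \big[setU/set0]_(i < n) Bn i))).
    apply: le_measure; rewrite ?inE; [exact: mB|exact: measurableC|].
    have sub m : \big[setU/set0]_(i < m) Bn i `<=` [set w | X2 w <= 0].
      elim: m => [|m IH]; first by rewrite big_ord0.
      rewrite big_ord_recr /= => w [/IH //|]; rewrite /Bn /= => ->.
      by rewrite oppr_le0.
    move=> w /= hw hU; have := sub n w hU; rewrite /= hw intr_natz.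
    by have := ltr0Sn R k; lra.
  by rewrite probability_setC // Un -EFinB opprB addrC subrK.
have fin : P (B (k.+1)%:Z) \is a fin_num by rewrite fin_num_measure //; exact: mB.
have : fine (P (B (k.+1)%:Z)) <= 0.
  rewrite -(cvg_lim _ (q_cvg R)) //; apply: limr_ge; first exact: (cvgP _ (q_cvg R)).
  by apply: nearW => n; rewrite -lee_fin fineK.
move=> hle; apply/eqP; rewrite eq_le measure_ge0 andbT.
by rewrite -(fineK fin) lee_fin.
Qed.

Lemma PBz (j : int) (k : nat) : j = - k%:Z -> P (B j) = (s * q ^+ k.+1)%:E.
Proof. by move=> ->; rewrite intrN intr_natz; exact: h2. Qed.

Lemma PBp (j : int) (k : nat) : j = k.+1%:Z -> P (B j) = 0%E.
Proof. by move=> ->; exact: PB_pos. Qed.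

Lemma s_neq0 : s != 0.
Proof. by apply/eqP => h; have := s_sq R; rewrite h mul0r; lra. Qed.

Lemma PU (A C : set T) : measurable A -> measurable C -> A `&` C = set0 ->
  P (A `|` C) = (P A + P C)%E.
Proof. exact: measureU. Qed.

Lemma PDI (A C : set T) : measurable A -> measurable C ->
  P A = (P (A `\` C) + P (A `&` C))%E.
Proof. exact: measureDI. Qed.

Local Notation A0 := (X1 @^-1` [set 0]).
Local Notation A1 := (X1 @^-1` [set 1]).

Lemma mA0 : measurable A0. Proof. exact: measurable_funPTI. Qed.
Lemma mA1 : measurable A1. Proof. exact: measurable_funPTI. Qed.

Lemma A01 : A0 `&` A1 = set0.
Proof.
apply/seteqP; split => w //= [ha hb]; rewrite ha in hb.
by move/eqP: hb; rewrite eq_sym oner_eq0.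
Qed.

Lemma A0c : P (~` (A0 `|` A1)) = 0%E.
Proof.
rewrite probability_setC; last exact: measurableU mA0 mA1.
rewrite PU; [|exact: mA0|exact: mA1|exact: A01]. rewrite h0 h1 -EFinD.
have -> : (s - 1) / s + 1 / s = 1 by field; exact: s_neq0.
by rewrite subrr.
Qed.

Lemma decomp (m : int) : P ((fun w => X1 w + X2 w) @^-1` [set m%:~R]) =
  (P A0 * P (B m) + P A1 * P (B (m - 1)))%E.
Proof.
set S := (fun w => X1 w + X2 w) @^-1` _.
set U := A0 `|` A1.
have mX : measurable_fun setT (fun w => X1 w + X2 w).
  exact: measurable_realfun.measurable_funD (measurable_funPT X1) (measurable_funPT X2).
have mS : measurable S by rewrite -[S]setTI; exact: mX.
have mU : measurable U by exact: measurableU mA0 mA1.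
rewrite (PDI _ _ mS mU).
have -> : P (S `\` U) = 0%E.
  apply: (subset_measure0 (B := ~` U)).
  all: try exact: measurableD.
  all: try exact: measurableC.
  all: try by move=> w [].
  exact: A0c.
rewrite add0e.
have -> : S `&` U = (A0 `&` B m) `|` (A1 `&` B (m - 1)).
  apply/seteqP; split => w /=.
    move=> [hS [hA|hA]]; rewrite /S /= in hS hA.
      by left; split => //; rewrite /=; lra.
    by right; split => //; rewrite /= intrB; lra.
  move=> [[hA hB]|[hA hB]]; rewrite /= in hA hB; rewrite /S /=.
    by split; [rewrite /=; lra | left].
  by rewrite intrB in hB; split; [rewrite /=; lra | right].
rewrite PU.
- by rewrite !hind //; exact: measurable_set1.
- exact: measurableI mA0 (mB _).
- exact: measurableI mA1 (mB _).
- apply/seteqP; split => w //= [[ha _] [hb _]]; rewrite ha in hb.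
  by move/eqP: hb; rewrite eq_sym oner_eq0.
Qed.

Lemma PX (m : int) : P ((fun w => X1 w + X2 w) @^-1` [set m%:~R]) = (pX R m)%:E.
Proof.
rewrite decomp h0 h1.
have sn := s_neq0.
case: m => [[|n]|n].
- rewrite (PBz 0 0) // (PBz (0 - 1) 1) // pX0 -!EFinM -EFinD; congr EFin.
  by field.
- rewrite (PBp _ n) // pX_pos; case: n => [|n].
    rewrite (PBz (1 - 1) 0) // mule0 add0e -EFinM /=; congr EFin; by field.
  rewrite (PBp (n.+2%:Z - 1) n); last by rewrite -[n.+2]addn1 PoszD addrK.
  by rewrite !mule0 adde0.
- rewrite (PBz _ n.+1) ?NegzE // (PBz (- n.+1%:Z - 1) n.+2); last by rewrite -opprD -[n.+2]addn1 PoszD.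
  rewrite pX_neg -!EFinM -EFinD; congr EFin; rewrite !exprS; by field.
Qed.

End dist.


Section tker.
Variable R : realType.
Local Notation s := (Num.sqrt (2:R)).
Local Notation q := (Num.sqrt (2:R) - 1).
Local Notation r := (Num.sqrt (2:R) + 1).

Lemma rq : r * q = 1.
Proof. have := s_sq R; lra. Qed.

Lemma r_gt0 : 0 < r.
Proof. have := s_ge0 R; lra. Qed.

Lemma rq_pow k : r ^+ k * q ^+ k = 1.
Proof. by rewrite -exprMn rq expr1n. Qed.

Lemma pX_ge0 m : 0 <= pX R m.
Proof.
have hq := q_gt0 R; rewrite /pX; case: ifP => _.
  by rewrite mulr_ge0 // exprn_ge0 // ltW.
by case: ifP => _ //; rewrite ltW.
Qed.

Lemma Tker_pX (x y : int) : Tker R x y = r ^ (2 - y + x) * pX R (y - x).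
Proof.
rewrite /Tker.
have -> : 2 - y + x = 2 - (y - x) by ring.
have -> : (y <= x) = (y - x <= 0) by rewrite subr_le0.
have -> : (y == x + 1) = (y - x == 1).
  by apply/eqP/eqP => h; lia.
move: (y - x) => m.
case: m => [[|n]|n].
- by rewrite /= pX0 -exprnP mulrCA rq_pow mulr1.
- rewrite pX_pos; case: n => [|n] /=.
    by rewrite -exprnP expr1 rq.
  by rewrite mulr0.
  rewrite NegzE pX_neg opprK.
  have -> : (- n.+1%:Z <= 0) = true by lia.
  have -> : 2 + n.+1%:Z = n.+3%:Z by lia.
  by rewrite -exprnP mulrCA rq_pow mulr1.
Qed.

Lemma Tker_ge0 x y : 0 <= Tker R x y.
Proof. by rewrite /Tker; case: ifP => _ //; case: ifP. Qed.

Lemma Tker_le2 x y : Tker R x y <= 2.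
Proof. by rewrite /Tker; case: ifP => _ //; case: ifP => _ //; lra. Qed.

End tker.

Local Notation rr := (Num.sqrt 2 + 1) (only parsing).

Theorem proposition2p1 (R : realType) (d : measure_display)
  (Omega : measurableType d) (P : probability Omega R)
  (X1 X2 : {RV P >-> R}) :
  (forall w, X1 w \is a Num.int) ->
  (forall w, X2 w \is a Num.int) ->
  indep2 P X1 X2 ->
  P (X1 @^-1` [set 0]) = ((Num.sqrt 2 - 1) / Num.sqrt 2)%:E ->
  P (X1 @^-1` [set 1]) = (1 / Num.sqrt 2)%:E ->
  (forall k : nat,
     P (X2 @^-1` [set - k%:R]) = (Num.sqrt 2 * (Num.sqrt 2 - 1) ^+ k.+1)%:E) ->
  let X := (fun w => X1 w + X2 w) in
  [/\ ('E_P[X] = 0)%E,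
      ('V_P[X] = (Num.sqrt 2)%:E)%E,
      (forall x y : int,
         (Tker R x y)%:E =
         ((Num.sqrt 2 + 1) ^ (2 - y + x))%:E * P (X @^-1` [set (y - x)%:~R]))%E
    & (forall f : int -> R, ell1 f -> forall x : int,
         (Top f x)%:E =
         ((Num.sqrt 2 + 1) ^+ 2)%:E *
         'E_P[fun w => (powR (Num.sqrt 2 + 1) (- X w) * f (x + Num.floor (X w)))%R])%E].
Proof.
move=> iX1 iX2 hind h0 h1 h2 X.
have PXm (m : int) : P (X @^-1` [set m%:~R]) = (pX R m)%:E by exact: PX.
have iX w : X w \is a Num.int by rewrite /X rpredD.
have mX : measurable_fun setT X.
  exact: measurable_realfun.measurable_funD (measurable_funPT X1) (measurable_funPT X2).
have pYE (c y : int) : fine (P (X @^-1` [set (y - c)%:~R])) = pX R (y - c).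
  by rewrite PXm.
have XE w : X w = (Num.floor (X w))%:~R by rewrite Num.Theory.floorK.
have bE N : Zpsum (fun y => `|(y%:~R : R)| * fine (P (X @^-1` [set (y - 0)%:~R]))) N
    <= Num.sqrt 2.
  apply: le_trans (vv_le R N); apply: Zpsum_le => y; rewrite pYE subr0.
  by apply: ler_wpM2r; [exact: pX_ge0 | exact: abs_le_sq].
have [l [hl El]] := @expect_series R d Omega P X mX iX 0 (fun y => y%:~R) _ bE.
have EX : ('E_P[X] = 0)%E.
  have -> : X = (fun w => (0 + Num.floor (X w))%:~R) by apply/funext => w; rewrite add0r -XE.
  rewrite El; congr EFin.
  have e : (fun N => Zpsum (fun y => y%:~R * fine (P (X @^-1` [set (y - 0)%:~R]))) N) = ee R.
    apply/funext => N; rewrite /ee; congr Zpsum; apply/funext => y; by rewrite pYE subr0.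
  rewrite e in hl; exact: (cvg_unique _ hl (ee_cvg R)).
split => //.
- have bV N : Zpsum (fun y => `|(y%:~R * y%:~R : R)| * fine (P (X @^-1` [set (y - 0)%:~R]))) N
      <= Num.sqrt 2.
    apply: le_trans (vv_le R N); apply: Zpsum_le => y; rewrite pYE subr0.
    by rewrite ger0_norm // -expr2 sqr_ge0.
  have [l2 [hl2 El2]] := @expect_series R d Omega P X mX iX 0
    (fun y => y%:~R * y%:~R) _ bV.
  rewrite /variance covariance.unlock EX /=.
  have -> : ((X \- cst 0) * (X \- cst 0))%R = (fun w => (0 + Num.floor (X w))%:~R *
      (0 + Num.floor (X w))%:~R) :> (Omega -> R).
    apply/funext => w; rewrite add0r -XE.
    by change ((X w - 0) * (X w - 0) = X w * X w); rewrite subr0.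
  apply: (eq_trans El2); congr EFin.
  have e : (fun N => Zpsum (fun y => y%:~R * y%:~R * fine (P (X @^-1` [set (y - 0)%:~R]))) N) = vv R.
    apply/funext => N; rewrite /vv; congr Zpsum; apply/funext => y; by rewrite pYE subr0.
  rewrite e in hl2; exact: (cvg_unique _ hl2 (vv_cvg R)).
- by move=> x y; rewrite PXm -EFinM Tker_pX.
move=> f [Mf hMf] x.
have r0 : 0 < rr :> R by exact: r_gt0.
have hr : (rr : R) \is a GRing.unit by rewrite unitfE; exact: lt0r_neq0.
pose h y := rr ^ (x - y) * f y.
have Tpow y : rr ^ (2 - y + x) = rr ^+ 2 * rr ^ (x - y) :> R.
  by rewrite exprnP -exprzDr //; congr (_ ^ _); lia.
have key y : Tker R x y * f y = rr ^+ 2 * (h y * pX R (y - x)).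
  by rewrite Tker_pX Tpow /h; ring.
have habs y : `|h y| * pX R (y - x) = (rr ^+ 2)^-1 * (Tker R x y * `|f y|).
  rewrite Tker_pX Tpow /h normrM (ger0_norm (ltW (exprz_gt0 _ r0))).
  by field.
have bound N : Zpsum (fun y => `|h y| * fine (P (X @^-1` [set (y - x)%:~R]))) N
    <= (rr ^+ 2)^-1 * (2 * Mf).
  rewrite (_ : Zpsum _ N = (rr ^+ 2)^-1 * Zpsum (fun y => Tker R x y * `|f y|) N); last first.
    rewrite -Zpsum_mulr; congr Zpsum; apply/funext => y; by rewrite pYE habs.
  apply: ler_wpM2l; first by rewrite invr_ge0 exprn_ge0 // ltW.
  apply: (@le_trans _ _ (Zpsum (fun y => 2 * `|f y|) N)).
    apply: Zpsum_le => y; apply: ler_wpM2r; [exact: normr_ge0 | exact: Tker_le2].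
  by rewrite Zpsum_mulr; apply: ler_wpM2l => //; exact: hMf.
have [l4 [hl4 El4]] := @expect_series R d Omega P X mX iX x h _ bound.
have cv : (fun N => Zpsum (fun y => Tker R x y * f y) N) @ \oo --> rr ^+ 2 * l4.
  have e : (fun N => Zpsum (fun y => Tker R x y * f y) N) = (fun N => rr ^+ 2 *
      Zpsum (fun y => h y * fine (P (X @^-1` [set (y - x)%:~R]))) N).
    apply/funext => N; rewrite -Zpsum_mulr; congr Zpsum; apply/funext => y.
    by rewrite pYE key.
  rewrite e; exact: cvgMl_tmp hl4.
rewrite /Top /Zsum (cvg_lim _ cv) //.
have -> : (fun w => powR rr (- X w) * f (x + Num.floor (X w))) =
    (fun w => h (x + Num.floor (X w))).
  apply/funext => w; rewrite /h {1}(XE w) -intrN powR_intmul ?ltW //.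
  by congr (_ ^ _ * _); rewrite opprD addrA subrr add0r.
by rewrite El4 EFinM.
Qed.
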